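(* (1) The map $I \mapsto \underline{M}(I)$ is a bijection between tropical ideals $I \subset \mathbb{B}[x_1^{\pm1},\dots,x_n^{\pm1}]$ and finitary matroids on $\mathbb{Z}^n$ that are invariant under the action of $\mathbb{Z}^n$ by translation. (2) Consequently, for every $d\ge 1$, the map $I \mapsto \mathcal{H}(\underline{M}(I))$ is a bijection between paving tropical ideals of degree $d+1$ in $\mathbb{B}[x_1^{\pm1},\dots,x_n^{\pm1}]$ and $d$-partitions of $\mathbb{Z}^n$ that are invariant under the action of $\mathbb{Z}^n$.
   Context: The Boolean semiring is $\mathbb{B}=\{\infty,0\}$ with addition $\oplus=\min$ and multiplication $+$. For $f=\bigoplus_{\mathbf u\in\mathbb{Z}^n} c_{\mathbf u}\mathbf x^{\mathbf u}\in\mathbb{B}[x_1^{\pm1},\dots,x_n^{\pm1}]$, $\operatorname{supp}(f)=\{\mathbf u: c_{\mathbf u}\neq\infty\}$. An ideal $I$ is a tropical ideal if for all $f,g\in I$ and $\mathbf u\in\operatorname{supp}(f)\cap\operatorname{supp}(g)$ there is $h\in I$ with $\operatorname{supp}(f)\,\Delta\,\operatorname{supp}(g)\subset\operatorname{supp}(h)\subset(\operatorname{supp}(f)\cup\operatorname{supp}(g))\setminus\{\mathbf u\}$. The underlying matroid $\underline{M}(I)$ is the finitary matroid on $\mathbb{Z}^n$ in which a set is independent iff it contains the support of no polynomial of $I$ (its circuits are the minimal supports of polynomials in $I$). A finitary matroid on a set $E$: nonempty collection of independent sets closed under subsets, satisfying augmentation, with a set independent whenever all its finite subsets are. A tropical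 ideal is zero-dimensional of degree $r$ iff $\underline{M}(I)$ has finite rank $r$ (equivalent to the Hilbert-polynomial definition). A zero-dimensional tropical ideal $I$ is a paving tropical ideal if $\underline{M}(I)$ is a paving matroid, i.e. all circuits have size $\deg(I)$ or $\deg(I)+1$. A hyperplane of a finite-rank matroid $M$ is a maximal subset of rank $\operatorname{rank}(M)-1$; $\mathcal{H}(M)$ is the set of hyperplanes. A $d$-partition of a set $E$ ($|E|\ge d+1$) is a collection $\mathcal P$ of subsets (blocks) with $|\mathcal P|\ge2$, every block of size $\ge d$, and every $d$-subset of $E$ contained in exactly one block. $\mathbb{Z}^n$ acts on subsets by $\mathbf u+S=\{\mathbf u+\mathbf v:\mathbf v\in S\}$, on collections by $\mathbf u+\mathcal P=\{\mathbf u+S:S\in\mathcal P\}$, and similarly on matroids on $\mathbb{Z}^n$; invariance means fixed by every $\mathbf u\in\mathbb{Z}^n$. *)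

(* Defs.v *)
From mathcomp Require Import all_boot all_order all_algebra.
From Stdlib Require Import ClassicalEpsilon.
Set Implicit Arguments.
Unset Strict Implicit.
Unset Printing Implicit Defensive.
Import GRing.Theory.
Local Open Scope ring_scope.

Definition Zn (n : nat) := 'rV[int]_n.
Definition zset (n : nat) := Zn n -> Prop.

Definition zsubset n (A B : zset n) := forall x, A x -> B x.
Definition seq_set n (s : seq (Zn n)) : zset n := fun x => x \in s.

Definition translate n (u : Zn n) (S : zset n) : zset n := fun x => S (x - u).

Definition has_card n (A : zset n) (k : nat) :=
  exists s : seq (Zn n), [/\ uniq s, size s = k & forall x, A x <-> x \in s].

Inductive Bsr := Binf | Bzero.
(* addition = min *)
Definition Badd (a b : Bsr) : Bsr :=
  match a, b with Binf, Binf => Binf | _, _ => Bzero end.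
(* multiplication = + *)
Definition Bmul (a b : Bsr) : Bsr :=
  match a, b with Bzero, Bzero => Bzero | _, _ => Binf end.

(* Laurent "polynomials": coefficient functions Z^n -> B with finite support *)
Definition Bcoef (n : nat) := Zn n -> Bsr.
Definition supp n (f : Bcoef n) : zset n := fun u => f u <> Binf.
Definition is_laurent n (f : Bcoef n) :=
  exists s : seq (Zn n), forall u, supp f u -> u \in s.
Definition pzero n : Bcoef n := fun _ => Binf.
Definition padd n (f g : Bcoef n) : Bcoef n := fun u => Badd (f u) (g u).
(* (f (.) g)_w = min_{u+v=w} (f_u + g_v); in B this is 0 iff some term is 0 *)
Definition pmul n (f g : Bcoef n) : Bcoef n := fun w =>
  if excluded_middle_informative
       (exists u v, u + v = w /\ Bmul (f u) (g v) = Bzero)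
  then Bzero else Binf.

Definition is_ideal n (I : Bcoef n -> Prop) :=
  [/\ forall f, I f -> is_laurent f,
      I (@pzero n),
      forall f g, I f -> I g -> I (padd f g)
    & forall f g, I f -> is_laurent g -> I (pmul g f)].

Definition is_tropical_ideal n (I : Bcoef n -> Prop) :=
  is_ideal I /\
  forall f g u, I f -> I g -> supp f u -> supp g u ->
    exists h, [/\ I h,
      (forall v, (supp f v /\ ~ supp g v) \/ (supp g v /\ ~ supp f v) -> supp h v)
    & (forall v, supp h v -> (supp f v \/ supp g v) /\ v <> u)].

(* A matroid is given by its predicate of independent sets. *)
Definition is_finitary_matroid n (M : zset n -> Prop) :=
  [/\ exists A, M A,
      forall A B, zsubset A B -> M B -> M A,
      forall s t : seq (Zn n), uniq s -> uniq t ->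
        M (seq_set s) -> M (seq_set t) -> (size s < size t)%N ->
        exists x, [/\ x \in t, x \notin s & M (seq_set (x :: s))]
    &
      forall A, (forall s, zsubset (seq_set s) A -> M (seq_set s)) -> M A].

Definition zinvariant n (P : zset n -> Prop) :=
  forall (u : Zn n) (A : zset n), P (translate u A) <-> P A.

Definition underM n (I : Bcoef n -> Prop) : zset n -> Prop := fun A =>
  forall f, I f -> (exists u, supp f u) -> ~ zsubset (supp f) A.

Definition rank_of n (M : zset n -> Prop) (A : zset n) (k : nat) :=
  (exists s : seq (Zn n), [/\ uniq s, size s = k, zsubset (seq_set s) A & M (seq_set s)])
  /\ forall s : seq (Zn n), uniq s -> zsubset (seq_set s) A -> M (seq_set s) ->
       (size s <= k)%N.

Definition matroid_rank n (M : zset n -> Prop) (r : nat) :=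
  rank_of M (fun _ => True) r.

Definition is_circuit n (M : zset n -> Prop) (C : zset n) :=
  ~ M C /\ forall D, zsubset D C -> ~ M D -> zsubset C D.

Definition zero_dim_tropical n (I : Bcoef n -> Prop) (r : nat) :=
  is_tropical_ideal I /\ matroid_rank (underM I) r.

Definition paving_tropical_ideal n (I : Bcoef n -> Prop) (r : nat) :=
  zero_dim_tropical I r /\
  forall C, is_circuit (underM I) C -> has_card C r \/ has_card C r.+1.

Definition hyperplanes n (M : zset n -> Prop) : zset n -> Prop := fun H =>
  exists r, matroid_rank M r /\
    (rank_of M H r.-1 /\
     forall H', zsubset H H' -> rank_of M H' r.-1 -> zsubset H' H).

Definition d_partition n (d : nat) (P : zset n -> Prop) :=
  [/\ exists s : seq (Zn n), uniq s /\ size s = d.+1,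
      exists B1 B2, [/\ P B1, P B2 & B1 <> B2],
      forall B, P B -> exists s : seq (Zn n),
                  [/\ uniq s, size s = d & zsubset (seq_set s) B]
    & forall s : seq (Zn n), uniq s -> size s = d ->
        exists B, [/\ P B, zsubset (seq_set s) B &
                   forall B', P B' -> zsubset (seq_set s) B' -> B' = B]].

(* Main.v *)
Set Warnings "-notation-overridden,-ambiguous-paths,-notation-incompatible-prefix".
Require Import Defs.
From mathcomp Require Import all_boot all_order all_algebra.
From mathcomp Require Import zify.
From Stdlib Require Import Lia ClassicalEpsilon Classical FunctionalExtensionality PropExtensionality.
Set Implicit Arguments. Unset Strict Implicit. Unset Printing Implicit Defensive.
Import GRing.Theory.

Lemma zset_ext n (A B : zset n) : (forall x, A x <-> B x) -> A = B.
Proof. move=> H; apply: functional_extensionality => x; apply: propositional_extensionality; exact: H. Qed.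

Lemma seq_setE n (s : seq (Zn n)) x : seq_set s x = (x \in s).
Proof. by []. Qed.

Lemma seq_set_eq n (s t : seq (Zn n)) : s =i t -> seq_set s = seq_set t.
Proof. move=> H; apply: zset_ext => x; rewrite /seq_set H; tauto. Qed.

Lemma fm_sub n (M : zset n -> Prop) A B : is_finitary_matroid M -> zsubset A B -> M B -> M A.
Proof. by case=> _ H _ _; apply: H. Qed.

Lemma fm_subs n (M : zset n -> Prop) (s t : seq (Zn n)) : is_finitary_matroid M ->
  {subset s <= t} -> M (seq_set t) -> M (seq_set s).
Proof. move=> HM st; apply: fm_sub => // x; exact: st. Qed.

Lemma fm_empty n (M : zset n -> Prop) : is_finitary_matroid M -> M (seq_set [::]).
Proof. move=> HM; case: (HM) => [[A HA] _ _ _]; apply: fm_sub HA => //. Qed.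

Lemma fm_aug n (M : zset n -> Prop) (s t : seq (Zn n)) : is_finitary_matroid M ->
  uniq s -> uniq t -> M (seq_set s) -> M (seq_set t) -> (size s < size t)%N ->
  exists x, [/\ x \in t, x \notin s & M (seq_set (x :: s))].
Proof. by case=> _ _ H _; apply: H. Qed.

Lemma dep_circuit n (M : zset n -> Prop) (s : seq (Zn n)) : is_finitary_matroid M ->
  ~ M (seq_set s) -> exists c, [/\ uniq c, {subset c <= s} & is_circuit M (seq_set c)].
Proof.
move=> HM.
suff: forall k (s : seq (Zn n)), (size s <= k)%N -> uniq s -> ~ M (seq_set s) ->
  exists c, [/\ uniq c, {subset c <= s} & is_circuit M (seq_set c)].
  move=> H Hs; have Hs' : ~ M (seq_set (undup s)) by rewrite (seq_set_eq (mem_undup s)).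
  have [c [c1 c2 c3]] := H _ (undup s) (leqnn _) (undup_uniq s) Hs'.
  by exists c; split=> // x /c2; rewrite mem_undup.
elim=> [|k IH] {s} s0.
  rewrite leqn0 => /nilP -> _ H; by case: H; apply: fm_empty.
move=> Hk Hu Hd; rename s0 into s.
case: (classic (exists x, x \in s /\ ~ M (seq_set (rem x s)))).
  move=> [x [xs Hx]].
  have Hsz : (size (rem x s) <= k)%N.
    by rewrite size_rem //; move: Hk xs; case: (s).
  have [c [c1 c2 c3]] := IH (rem x s) Hsz (rem_uniq x Hu) Hx.
  by exists c; split=> // y /c2 /mem_rem.
move=> Hno; exists s; split=> //; split=> // D DS HD x Sx.
apply: NNPP => Dx; apply: HD; apply: fm_sub HM _ (_ : M (seq_set (rem x s))).
  move=> y Dy; rewrite /seq_set (mem_rem_uniq _ Hu) inE (DS y Dy) andbT.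
  by apply/eqP => yx; apply: Dx; rewrite -yx.
by apply: NNPP => H; apply: Hno; exists x.
Qed.

Lemma circuit_seq n (M : zset n -> Prop) C : is_finitary_matroid M -> is_circuit M C ->
  exists c, uniq c /\ C = seq_set c.
Proof.
move=> HM [HC Hmin].
have [s [sC sd]] : exists s : seq (Zn n), zsubset (seq_set s) C /\ ~ M (seq_set s).
  apply: NNPP => H; apply: HC; case: HM => _ _ _; apply => s sC.
  by apply: NNPP => Hs; apply: H; exists s.
have Cs := Hmin _ sC sd.
exists (undup s); split; first exact: undup_uniq.
apply: zset_ext => x; rewrite /seq_set mem_undup; split; [exact: Cs | exact: sC].
Qed.

Lemma circuit_dep n (M : zset n -> Prop) C : is_circuit M C -> ~ M C.
Proof. by case. Qed.

Lemma circuit_in n (M : zset n -> Prop) v (B : seq (Zn n)) : is_finitary_matroid M ->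
  M (seq_set B) -> ~ M (seq_set (v :: B)) ->
  exists c, [/\ uniq c, {subset c <= v :: B}, v \in c & is_circuit M (seq_set c)].
Proof.
move=> HM HB Hd; have [c [c1 c2 c3]] := dep_circuit HM Hd.
exists c; split => //; apply: NNPP => /negP vc; apply: (circuit_dep c3).
apply: fm_subs HB => // x xc; have := c2 _ xc; rewrite inE => /orP [/eqP xv|//].
by move: vc; rewrite -xv xc.
Qed.

Lemma circuit_rem n (M : zset n -> Prop) (c : seq (Zn n)) x : uniq c ->
  is_circuit M (seq_set c) -> x \in c -> M (seq_set (rem x c)).
Proof.
move=> Hu [_ Hmin] xc; apply: NNPP => H.
have sub : zsubset (seq_set (rem x c)) (seq_set c).
  by move=> y; rewrite /seq_set => /mem_rem.
by have := Hmin _ sub H x xc; rewrite /seq_set mem_rem_uniqF.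
Qed.

Definition maxind n (M : zset n -> Prop) (X B : seq (Zn n)) :=
  [/\ uniq B, {subset B <= X}, M (seq_set B) &
      forall x, x \in X -> x \notin B -> ~ M (seq_set (x :: B))].

Lemma ext_max n (M : zset n -> Prop) (X A : seq (Zn n)) : is_finitary_matroid M ->
  uniq A -> {subset A <= X} -> M (seq_set A) -> exists B, {subset A <= B} /\ maxind M X B.
Proof.
move=> HM.
suff H : forall L (A : seq (Zn n)), uniq A -> M (seq_set A) -> exists B,
  [/\ uniq B, {subset A <= B}, {subset B <= A ++ L}, M (seq_set B) &
      forall x, x \in L -> x \notin B -> ~ M (seq_set (x :: B))].
  move=> uA AX MA; have [B [B1 B2 B3 B4 B5]] := H X A uA MA.
  exists B; split => //; split => // x /B3; rewrite mem_cat => /orP [/AX|] //.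
elim=> [|y L IH] {}A uA MA.
  by exists A; split => // x; rewrite cats0.
case: (classic (y \notin A /\ M (seq_set (y :: A)))) => [[yA My]|Hn].
  have uyA : uniq (y :: A) by rewrite /= yA uA.
  have [B [B1 B2 B3 B4 B5]] := IH (y :: A) uyA My.
  exists B; split => //.
  - by move=> x xA; apply: B2; rewrite inE xA orbT.
  - move=> x /B3; rewrite !mem_cat !inE => /orP [/orP [->|->]|->]; rewrite ?orbT //.
  - move=> x; rewrite inE => /orP [/eqP ->|xL]; last exact: B5.
    by move=> yB; move: yB; rewrite B2 // inE eqxx.
have [B [B1 B2 B3 B4 B5]] := IH A uA MA.
exists B; split => //.
- move=> x /B3; rewrite !mem_cat !inE => /orP [->|->]; rewrite ?orbT //.
- move=> x; rewrite inE => /orP [/eqP ->|xL]; last exact: B5.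
  move=> yB My; apply: Hn; split.
    by apply/negP => yA; move: yB; rewrite B2.
  by apply: fm_subs My => // z; rewrite !inE => /orP [->//|/B2 ->]; rewrite orbT.
Qed.

Lemma maxind_size n (M : zset n -> Prop) X B1 B2 : is_finitary_matroid M ->
  maxind M X B1 -> maxind M X B2 -> size B1 = size B2.
Proof.
move=> HM.
suff H : forall B1 B2, maxind M X B1 -> maxind M X B2 -> ~ (size B1 < size B2)%N.
  move=> h1 h2; case: (ltngtP (size B1) (size B2)) => // lt.
    by case: (H _ _ h1 h2 lt).
  by case: (H _ _ h2 h1 lt).
move=> C1 C2 [u1 s1 m1 x1] [u2 s2 m2 x2] lt.
have [x [xC2 xC1 Mx]] := fm_aug HM u1 u2 m1 m2 lt.
exact: (x1 x (s2 _ xC2) xC1 Mx).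
Qed.

Lemma ind_le_max n (M : zset n -> Prop) X A B : is_finitary_matroid M ->
  uniq A -> {subset A <= X} -> M (seq_set A) -> maxind M X B -> (size A <= size B)%N.
Proof.
move=> HM uA AX MA HB; have [B' [AB' HB']] := ext_max HM uA AX MA.
rewrite -(maxind_size HM HB' HB); apply: uniq_leq_size => //.
Qed.

Lemma maxind_cons n (M : zset n -> Prop) X B y : maxind M X B -> ~ M (seq_set (y :: B)) ->
  maxind M (y :: X) B.
Proof.
move=> [u s m h] hy; split => //.
  by move=> x /s xX; rewrite inE xX orbT.
by move=> x; rewrite inE => /orP [/eqP ->|]; [|exact: h].
Qed.

Lemma strong_elim n (M : zset n -> Prop) (c1 c2 : seq (Zn n)) u v : is_finitary_matroid M ->
  uniq c1 -> uniq c2 -> is_circuit M (seq_set c1) -> is_circuit M (seq_set c2) ->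
  u \in c1 -> u \in c2 -> v \in c1 -> v \notin c2 ->
  exists c, [/\ uniq c, is_circuit M (seq_set c), v \in c &
     forall x, x \in c -> (x \in c1 \/ x \in c2) /\ x <> u].
Proof.
move=> HM u1 u2 C1 C2 uc1 uc2 vc1 vc2.
have uv : u != v by apply/eqP => e; move: vc2; rewrite -e uc2.
set Y := [seq x <- c1 ++ c2 | (x != u) && (x != v)].
have memY x : (x \in Y) = [&& x != u, x != v & x \in c1 ++ c2].
  by rewrite mem_filter andbA.
have sub0 : {subset [::] <= Y} by [].
have u0 : uniq ([::] : seq (Zn n)) by [].
have [B [_ HB]] := ext_max HM u0 sub0 (fm_empty HM).
have sub2 : {subset rem u c2 <= Y}.
  move=> x; rewrite (mem_rem_uniq _ u2) inE memY mem_cat => /andP [-> xc2].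
  rewrite xc2 orbT andbT /=; by apply/eqP => e; move: vc2; rewrite -e xc2.
have [B2 [AB2 HB2]] := ext_max HM (rem_uniq u u2) sub2 (circuit_rem u2 C2 uc2).
have HB2' : maxind M (u :: Y) B2.
  apply: (maxind_cons (y:=u) HB2) => H; apply: (circuit_dep C2); apply: fm_subs H => // x xc2.
  rewrite inE; case: (eqVneq x u) => //= xu; apply: AB2.
  by rewrite (mem_rem_uniq _ u2) inE xu xc2.
have sub1 : {subset rem v c1 <= u :: Y}.
  move=> x; rewrite (mem_rem_uniq _ u1) inE inE memY mem_cat => /andP [xv xc1].
  by rewrite xv xc1 /=; case: (x == u).
have [B1 [AB1 HB1]] := ext_max HM (rem_uniq v u1) sub1 (circuit_rem u1 C1 vc1).
have HB1' : maxind M (v :: u :: Y) B1.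
  apply: (maxind_cons (y:=v) HB1) => H; apply: (circuit_dep C1); apply: fm_subs H => // x xc1.
  rewrite inE; case: (eqVneq x v) => //= xv; apply: AB1.
  by rewrite (mem_rem_uniq _ u1) inE xv xc1.
have e1 := maxind_size HM HB HB2.
have e2 := maxind_size HM HB1 HB2'.
case: (HB) => uB sB MB _.
have vB : v \notin B by apply/negP => /sB; rewrite memY eqxx andbF.
have Hd : ~ M (seq_set (v :: B)).
  move=> H; have uvB : uniq (v :: B) by rewrite /= vB uB.
  have sub : {subset v :: B <= v :: u :: Y}.
    by move=> x; rewrite !inE => /orP [->|/sB ->]; rewrite ?orbT.
  have := ind_le_max HM uvB sub H HB1'; rewrite /= e2 -e1 ltnn; done.
have [c [cu cs vc cC]] := circuit_in HM MB Hd.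
exists c; split => // x /cs; rewrite inE => /orP [/eqP ->|/sB].
  by split; [left | apply/eqP; rewrite eq_sym].
rewrite memY mem_cat => /and3P [/eqP xu _ /orP H]; split => //; case: H; tauto.
Qed.

Lemma count_le_in (T : eqType) (p q : pred T) (s : seq T) :
  (forall x, x \in s -> q x -> p x) -> (count q s <= count p s)%N.
Proof.
elim: s => //= y s IH H; apply: leq_add.
  by case qy: (q y) => //; rewrite (H y) // inE eqxx.
by apply: IH => x xs; apply: H; rewrite inE xs orbT.
Qed.

Lemma count_lt (T : eqType) (p q : pred T) (s : seq T) e :
  (forall x, x \in s -> q x -> p x) -> e \in s -> p e -> ~~ q e -> (count q s < count p s)%N.
Proof.
elim: s => //= y s IH H; rewrite inE => /orP [/eqP ->|es] pe qe.
  rewrite (negbTE qe) pe add0n add1n ltnS; apply: count_le_in => x xs; apply: H.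
  by rewrite inE xs orbT.
rewrite -addnS; apply: leq_add.
  by case qy: (q y) => //; rewrite (H y) // inE eqxx.
by apply: IH => // x xs; apply: H; rewrite inE xs orbT.
Qed.

Local Open Scope ring_scope.
Lemma suppE n (f : Bcoef n) u : supp f u <-> f u = Bzero.
Proof. rewrite /supp; case: (f u); split => //. Qed.

Lemma nsuppE n (f : Bcoef n) u : ~ supp f u <-> f u = Binf.
Proof. rewrite /supp; case: (f u); split => //; [by move=> _ H; apply: H | by move=> H; case: H]. Qed.

Lemma Bcoef_ext n (f g : Bcoef n) : (forall u, supp f u <-> supp g u) -> f = g.
Proof.
move=> H; apply: functional_extensionality => u; have := H u; rewrite /supp.
by case: (f u); case: (g u) => //; case => A B; [case: B | case: A].
Qed.

Lemma supp_padd n (f g : Bcoef n) u : supp (padd f g) u <-> supp f u \/ supp g u.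
Proof. rewrite /supp /padd; case: (f u); case: (g u) => /=; intuition. Qed.

Lemma supp_pmul n (g f : Bcoef n) w :
  supp (pmul g f) w <-> exists a b, [/\ a + b = w, supp g a & supp f b].
Proof.
rewrite /supp /pmul; case: excluded_middle_informative => [[a [b [ab H]]]|H].
  split=> // _; exists a, b; split => //; move: H; rewrite /Bmul.
    by case: (g a). by case: (f b); case: (g a).
split; first by move=> H'; case: H'.
move=> -[a [b [ab ga fb]]] _; apply: H; exists a, b; split => //.
by move: ga fb; rewrite /Bmul; case: (g a); case: (f b).
Qed.

Lemma supp_pzero n u : ~ supp (@pzero n) u.
Proof. by []. Qed.

Definition insupp n (f : Bcoef n) x : bool := if f x is Bzero then true else false.
Lemma insuppE n (f : Bcoef n) x : insupp f x = true <-> supp f x.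
Proof. rewrite /insupp /supp; case: (f x); split => //; by move=> H; case: H. Qed.

Lemma laurent_seq n (f : Bcoef n) : is_laurent f ->
  exists s : seq (Zn n), uniq s /\ forall u, supp f u <-> u \in s.
Proof.
case=> s Hs; exists (undup (filter (insupp f) s)); split; first exact: undup_uniq.
move=> u; rewrite mem_undup mem_filter; split.
  by move=> H; rewrite (Hs _ H) andbT; apply/insuppE.
by case/andP => /insuppE.
Qed.

Definition mono n (a : Zn n) : Bcoef n := fun w => if w == a then Bzero else Binf.

Lemma mono_laurent n (a : Zn n) : is_laurent (mono a).
Proof. exists [:: a] => u; rewrite /supp /mono; case: eqP => [->|//]; by rewrite inE. Qed.

Lemma supp_mono_mul n (a : Zn n) f w : supp (pmul (mono a) f) w <-> supp f (w - a).
Proof.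
rewrite supp_pmul; split.
  move=> [a' [b [ab ga fb]]]; move: ga; rewrite /supp /mono; case: eqP => // e _.
  by rewrite -ab e addrC addKr.
move=> H; exists a, (w - a); split => //; first by rewrite addrC subrK.
by rewrite /supp /mono eqxx.
Qed.

Lemma translateK n (u : Zn n) A : translate (- u) (translate u A) = A.
Proof. apply: zset_ext => x; rewrite /translate opprK addrK; tauto. Qed.

Lemma translateKV n (u : Zn n) A : translate u (translate (- u) A) = A.
Proof. apply: zset_ext => x; rewrite /translate opprK subrK; tauto. Qed.

Lemma translate_sub n (u : Zn n) A B : zsubset A B -> zsubset (translate u A) (translate u B).
Proof. by move=> H x; apply: H. Qed.

Lemma zinv_of n (P : zset n -> Prop) : (forall u A, P A -> P (translate u A)) -> zinvariant P.
Proof.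
move=> H u A; split; last exact: H.
by move=> /(H (- u)); rewrite translateK.
Qed.

Lemma map_tr_seq n (u : Zn n) (s : seq (Zn n)) :
  seq_set [seq x + u | x <- s] = translate u (seq_set s).
Proof.
apply: zset_ext => x; rewrite /translate /seq_set; split.
  by case/mapP => y ys ->; rewrite addrK.
by move=> H; apply/mapP; exists (x - u) => //; rewrite subrK.
Qed.

Lemma map_tr_uniq n (u : Zn n) (s : seq (Zn n)) : uniq [seq x + u | x <- s] = uniq s.
Proof. apply: map_inj_uniq => x y; exact: (can_inj (addrK u)). Qed.

Lemma underM_neg n (I : Bcoef n -> Prop) A : ~ underM I A ->
  exists f, [/\ I f, exists u, supp f u & zsubset (supp f) A].
Proof. move=> H; apply: NNPP => H'; apply: H => f If ne sub; apply: H'; by exists f. Qed.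

Lemma underM_sub n (I : Bcoef n -> Prop) A B : zsubset A B -> underM I B -> underM I A.
Proof. by move=> AB HB f If ne fA; apply: (HB f If ne) => x /fA /AB. Qed.

Lemma trop_aug n (I : Bcoef n -> Prop) : is_tropical_ideal I -> forall s t : seq (Zn n),
  uniq s -> uniq t -> underM I (seq_set s) -> underM I (seq_set t) -> (size s < size t)%N ->
  exists x, [/\ x \in t, x \notin s & underM I (seq_set (x :: s))].
Proof.
move=> [HI Helim].
have caseA : forall s t : seq (Zn n), {subset s <= t} -> uniq s -> uniq t ->
    underM I (seq_set t) -> (size s < size t)%N ->
    exists x, [/\ x \in t, x \notin s & underM I (seq_set (x :: s))].
  move=> s t st us ut It lt.
  have [x [xt xs]] : exists x, x \in t /\ x \notin s.
    apply: NNPP => H; have : {subset t <= s}.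
      by move=> x xt; apply: NNPP => /negP xs; apply: H; exists x.
    by move=> /(uniq_leq_size ut); rewrite leqNgt lt.
  exists x; split => //; apply: underM_sub It => y; rewrite /seq_set inE.
  by case/orP => [/eqP ->|/st].
suff H : forall k (s t : seq (Zn n)), (count (fun x => x \notin t) s <= k)%N ->
  uniq s -> uniq t -> underM I (seq_set s) -> underM I (seq_set t) -> (size s < size t)%N ->
  exists x, [/\ x \in t, x \notin s & underM I (seq_set (x :: s))].
  by move=> s t; apply: (H _ s t (leqnn _)).
elim=> [|k IH] s t Hk us ut Is It lt.
  apply: caseA => // x xs; apply: NNPP => /negP xt.
  have : (0 < count (fun x => x \notin t) s)%N by rewrite -has_count; apply/hasP; exists x.
  by rewrite lt0n -leqn0 Hk.
case: (classic {subset s <= t}) => [st|nst]; first exact: caseA.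
have [e [es et]] : exists e, e \in s /\ e \notin t.
  apply: NNPP => H; apply: nst => x xs; apply: NNPP => /negP xt; apply: H; by exists x.
apply: NNPP => Hno.
have Hno' : forall x, x \in t -> x \notin s -> ~ underM I (seq_set (x :: s)).
  by move=> x xt xs Hx; apply: Hno; exists x.
have key : forall f, f \in t -> f \notin s -> ~ underM I (seq_set (e :: rem f t)).
  move=> f ft fs Ht'.
  have ut' : uniq (e :: rem f t).
    by rewrite /= (mem_rem_uniq _ ut) inE (negbTE et) andbF rem_uniq.
  have sz : size (e :: rem f t) = size t.
    by rewrite /= size_rem //; move: ft; case: (t).
  have cnt : (count (fun x => x \notin e :: rem f t) s <= k)%N.
    rewrite -ltnS; apply: leq_trans Hk; apply: (count_lt (e := e)) => //.
      move=> x xs; rewrite inE (mem_rem_uniq _ ut) inE negb_or negb_and negbK.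
      case/andP => _ /orP [/eqP xf|//]; by move: fs; rewrite -xf xs.
    by rewrite inE eqxx.
  have lt' : (size s < size (e :: rem f t))%N by rewrite sz.
  have [x [xt' xs Hx]] := IH s (e :: rem f t) cnt us ut' Is Ht' lt'.
  move: xt'; rewrite inE => /orP [/eqP xe|]; first by move: xs; rewrite xe es.
  by move/mem_rem => xt; exact: (Hno' x xt xs Hx).
have [f [ft fs]] : exists f, f \in t /\ f \notin s.
  apply: NNPP => H; have : {subset t <= s}.
    by move=> x xt; apply: NNPP => /negP xs; apply: H; exists x.
  by move=> /(uniq_leq_size ut); rewrite leqNgt lt.
have ein : forall g (f1 : Bcoef n), I f1 -> (exists u, supp f1 u) ->
    zsubset (supp f1) (seq_set (e :: rem g t)) -> supp f1 e.
  move=> g f1 If1 ne sub; apply: NNPP => ne1; apply: (It f1 If1 ne) => x /[dup] xs /sub.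
  rewrite /seq_set inE => /orP [/eqP xe|/mem_rem //]; by move: xs; rewrite xe.
have [f1 [If1 ne1 sub1]] := underM_neg (key f ft fs).
have e1 := ein _ _ If1 ne1 sub1.
have [g [g1 gt gs]] : exists g, [/\ supp f1 g, g \in t & g \notin s].
  apply: NNPP => H; apply: (Is f1 If1 ne1) => x /[dup] x1 /sub1.
  rewrite /seq_set inE => /orP [/eqP ->//|/mem_rem xt].
  apply: NNPP => /negP xs; apply: H; by exists x.
have [f2 [If2 ne2 sub2]] := underM_neg (key g gt gs).
have e2 := ein _ _ If2 ne2 sub2.
have [h [Ih h1 h2]] := Helim f1 f2 e If1 If2 e1 e2.
apply: (It h Ih).
  exists g; apply: h1; left; split => // /sub2; rewrite /seq_set inE mem_rem_uniqF // orbF.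
  by move/eqP => ge; move: gt; rewrite ge (negbTE et).
move=> x /h2 [H xe]; case: H => [/sub1|/sub2]; rewrite /seq_set inE => /orP [/eqP //|/mem_rem //].
Qed.

Lemma trop_matroid n (I : Bcoef n -> Prop) : is_tropical_ideal I -> is_finitary_matroid (underM I).
Proof.
move=> HI; split.
- by exists (fun _ => False) => f If [u fu] sub; apply: (sub u fu).
- by move=> A B AB; apply: underM_sub.
- exact: trop_aug.
- move=> A HA f If ne sub.
  have Hl : is_laurent f by case: HI => [[Hl _ _ _] _]; apply: Hl.
  have [s [us Hs]] := laurent_seq Hl.
  apply: (HA s _ f If ne) => x; last by move/Hs.
  by rewrite /seq_set => /Hs; apply: sub.
Qed.

Lemma trop_inv n (I : Bcoef n -> Prop) : is_tropical_ideal I -> zinvariant (underM I).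
Proof.
move=> [[_ _ _ Hmul] _]; apply: zinv_of => u A HA f If [x fx] sub.
apply: (HA (pmul (mono (- u)) f)).
- exact: Hmul If (mono_laurent _).
- by exists (x - u); apply/supp_mono_mul; rewrite opprK subrK.
- move=> w /supp_mono_mul; rewrite opprK => /sub; by rewrite /translate addrK.
Qed.

Definition Char n (M : zset n -> Prop) (f : Bcoef n) :=
  is_laurent f /\ forall u, supp f u -> exists C, [/\ is_circuit M C, C u & zsubset C (supp f)].

Lemma trop_min n (I : Bcoef n -> Prop) : is_tropical_ideal I -> forall f, I f -> forall u, supp f u ->
  exists g, [/\ I g, supp g u, zsubset (supp g) (supp f) &
    forall g', I g' -> (exists v, supp g' v) -> zsubset (supp g') (supp g) -> zsubset (supp g) (supp g')].
Proof.
move=> HI f If; have Hl : is_laurent f by case: HI => [[Hl _ _ _] _]; apply: Hl.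
have [s0 [us0 Hs0]] := laurent_seq Hl.
suff H : forall k (s : seq (Zn n)) f, (size s <= k)%N -> uniq s -> I f ->
  (forall v, supp f v -> v \in s) -> forall u, supp f u ->
  exists g, [/\ I g, supp g u, zsubset (supp g) (supp f) &
    forall g', I g' -> (exists v, supp g' v) -> zsubset (supp g') (supp g) -> zsubset (supp g) (supp g')].
  by apply: (H _ s0 f (leqnn _) us0 If) => v /Hs0.
case: HI => _ Helim; clear If Hl Hs0 us0 s0.
elim=> [|k IH] s {}f Hk us If Hs u fu.
  by move: Hk; rewrite leqn0 => /nilP sE; move: (Hs u fu); rewrite sE.
case: (classic (forall g', I g' -> (exists v, supp g' v) -> zsubset (supp g') (supp f) ->
   zsubset (supp f) (supp g'))) => [Hmin|Hnm].
  by exists f; split => // x.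
have [g' [Ig' ne' sub' [w fw gw]]] : exists g', [/\ I g', exists v, supp g' v,
    zsubset (supp g') (supp f) & exists2 w, supp f w & ~ supp g' w].
  apply: NNPP => H; apply: Hnm => g' Ig' ne' sub' x fx; apply: NNPP => gx; apply: H.
  by exists g'; split => //; exists x.
have szrem : forall w, w \in s -> (size (rem w s) <= k)%N.
  by move=> w0 w0s; rewrite size_rem //; move: Hk w0s; case: (s).
case: (classic (supp g' u)) => [gu|gu].
  have Hs' : forall v, supp g' v -> v \in rem w s.
    move=> v gv; rewrite (mem_rem_uniq _ us) inE (Hs v (sub' v gv)) andbT.
    by apply/eqP => e; apply: gw; rewrite -e.
  have [g [Ig gu' gsub gmin]] := IH (rem w s) g' (szrem w (Hs w fw)) (rem_uniq w us) Ig' Hs' u gu.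
  by exists g; split => // x /gsub /sub'.
case: ne' => v gv.
have [h [Ih h1 h2]] := Helim f g' v If Ig' (sub' v gv) gv.
have hsub : zsubset (supp h) (supp f).
  by move=> x /h2 [H _]; case: H => [//|/sub' //].
have Hs' : forall x, supp h x -> x \in rem v s.
  move=> x hx; have [_ xv] := h2 x hx.
  by rewrite (mem_rem_uniq _ us) inE (Hs x (hsub x hx)) andbT; apply/eqP.
have hu : supp h u by apply: h1; left.
have [g [Ig gu' gsub gmin]] := IH (rem v s) h (szrem v (Hs v (sub' v gv))) (rem_uniq v us) Ih Hs' u hu.
by exists g; split => // x /gsub /hsub.
Qed.

Lemma trop_circuit n (I : Bcoef n -> Prop) g : I g -> (exists v, supp g v) ->
  (forall g', I g' -> (exists v, supp g' v) -> zsubset (supp g') (supp g) -> zsubset (supp g) (supp g')) ->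
  is_circuit (underM I) (supp g).
Proof.
move=> Ig ne Hmin; split.
  by move=> H; apply: (H g Ig ne).
move=> D DS /underM_neg [f [If nf fD]] x gx.
have fg : zsubset (supp f) (supp g) by move=> y fy; exact: DS (fD y fy).
exact: fD _ (Hmin f If nf fg x gx).
Qed.

Lemma circuit_supp n (I : Bcoef n -> Prop) C : is_circuit (underM I) C -> exists g, I g /\ C = supp g.
Proof.
move=> [HC Hmin]; have [g [Ig ne gC]] := underM_neg HC.
exists g; split => //; apply: zset_ext => x; split; last exact: gC.
apply: (Hmin _ gC) => H; exact: (H g Ig ne).
Qed.

Lemma trop_Char n (I : Bcoef n -> Prop) : is_tropical_ideal I -> I = Char (underM I).
Proof.
move=> HI; apply: functional_extensionality => f; apply: propositional_extensionality.
have [[Hl H0 Hadd _] _] := HI.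
split.
  move=> If; split; first exact: Hl.
  move=> u fu; have [g [Ig gu gf gmin]] := trop_min HI If fu.
  exists (supp g); split => //; apply: trop_circuit => //; by exists u.
move=> [Hlf HC]; have [s [us Hs]] := laurent_seq Hlf.
suff [F [IF F1 F2]] : exists F, [/\ I F, zsubset (supp F) (supp f) &
    forall v, v \in s -> supp f v -> supp F v].
  have -> : f = F; last by [].
  by apply: Bcoef_ext => v; split; [move=> fv; apply: F2 => //; apply/Hs | apply: F1].
elim: (s) => [|x s' [F [IF F1 F2]]].
  by exists (@pzero n); split.
case: (classic (supp f x)) => [fx|fx].
  have [C [HCc Cx Cf]] := HC x fx; have [g [Ig Cg]] := circuit_supp HCc.
  exists (padd g F); split.
  - exact: Hadd.
  - by move=> v /supp_padd [gv|/F1 //]; apply: Cf; rewrite Cg.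
  - move=> v; rewrite inE => /orP [/eqP ->|vs] fv; apply/supp_padd.
      by left; rewrite -Cg.
    by right; apply: F2.
exists F; split => // v; rewrite inE => /orP [/eqP ->|vs] fv //; exact: F2.
Qed.

Lemma circuit_tr n (M : zset n -> Prop) C u : zinvariant M -> is_circuit M C ->
  is_circuit M (translate u C).
Proof.
move=> Hinv [HC Hmin]; split.
  by move=> /(proj1 (Hinv u C)).
move=> D DS HD.
have S1 : zsubset (translate (- u) D) C.
  by rewrite -(translateK u C); apply: translate_sub.
have HD' : ~ M (translate (- u) D) by move=> /(proj1 (Hinv (- u) D)).
have := translate_sub (u:=u) (Hmin _ S1 HD'); rewrite translateKV; exact.
Qed.

Definition ind_of n (c : seq (Zn n)) : Bcoef n := fun x => if x \in c then Bzero else Binf.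

Lemma supp_ind_of n (c : seq (Zn n)) x : supp (ind_of c) x <-> x \in c.
Proof. rewrite /supp /ind_of; case: (x \in c); split => //. Qed.

Lemma elim_key n (M : zset n -> Prop) f g u v : is_finitary_matroid M ->
  Char M f -> Char M g -> supp g u -> supp f v -> ~ supp g v ->
  exists c, [/\ uniq c, is_circuit M (seq_set c), v \in c &
     forall x, x \in c -> (supp f x \/ supp g x) /\ x <> u].
Proof.
move=> HM [_ Hf] [_ Hg] gu fv gv.
have [C1 [HC1 C1v C1f]] := Hf v fv; have [c1 [uc1 E1]] := circuit_seq HM HC1.
subst C1.
case: (boolP (u \in c1)) => uc1'; last first.
  exists c1; split => // x xc; split; first by left; apply: C1f.
  by move=> e; move: uc1'; rewrite -e xc.
have [C2 [HC2 C2u C2g]] := Hg u gu; have [c2 [uc2 E2]] := circuit_seq HM HC2.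
subst C2.
have vc2 : v \notin c2 by apply/negP => /C2g.
have [c [uc Hc vc Hx]] := strong_elim HM uc1 uc2 HC1 HC2 uc1' C2u C1v vc2.
exists c; split => // x /Hx [[/C1f|/C2g] xu]; tauto.
Qed.

Definition Bind n (P : Zn n -> Prop) : Bcoef n :=
  fun v => if excluded_middle_informative (P v) then Bzero else Binf.

Lemma supp_Bind n (P : Zn n -> Prop) v : supp (Bind P) v <-> P v.
Proof.
rewrite /supp /Bind; case: excluded_middle_informative => Pv; split => //.
Qed.

Lemma Char_trop n (M : zset n -> Prop) : is_finitary_matroid M -> zinvariant M ->
  is_tropical_ideal (Char M).
Proof.
move=> HM Hinv; split; first split.
- by move=> f [].
- split; first by exists [::] => u H; case: H.
  by move=> u H; case: H.
- move=> f g [[sf Hsf] Hf] [[sg Hsg] Hg]; split.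
    exists (sf ++ sg) => u /supp_padd H; rewrite mem_cat.
    by case: H => [/Hsf -> | /Hsg ->] //; rewrite orbT.
  move=> u /supp_padd [fu|gu].
    have [C [HC Cu Cf]] := Hf u fu; exists C; split => // x /Cf fx; apply/supp_padd; tauto.
  have [C [HC Cu Cg]] := Hg u gu; exists C; split => // x /Cg gx; apply/supp_padd; tauto.
- move=> f g [[sf Hsf] Hf] [sg Hsg]; split.
    exists [seq a + b | a <- sg, b <- sf] => w /supp_pmul [a [b [ab ga fb]]].
    by rewrite -ab; apply: allpairs_f; [apply: Hsg | apply: Hsf].
  move=> w /supp_pmul [a [b [ab ga fb]]].
  have [C [HC Cb Cf]] := Hf b fb.
  exists (translate a C); split.
  + exact: circuit_tr.
  + by rewrite /translate -ab addrC addKr.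
  + move=> x Cx; apply/supp_pmul; exists a, (x - a); split => //.
      by rewrite addrC subrK.
    exact: Cf.
- move=> f g u Hf Hg fu gu.
  pose P v := exists c, [/\ uniq c, is_circuit M (seq_set c), v \in c &
     forall x, x \in c -> (supp f x \/ supp g x) /\ x <> u].
  pose h := Bind P.
  have supph v : supp h v <-> P v by apply: supp_Bind.
  exists h; split.
  + case: Hf => [[sf Hsf] _]; case: Hg => [[sg Hsg] _]; split.
      exists (sf ++ sg) => v /supph [c [_ _ vc Hx]]; rewrite mem_cat.
      by case: (Hx v vc) => [[/Hsf ->|/Hsg ->] _]; rewrite ?orbT.
    move=> v /supph [c [uc Hc vc Hx]]; exists (seq_set c); split => // x xc.
    by apply/supph; exists c; split.
  + move=> v [[fv gv]|[gv fv]]; apply/supph.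
      exact: elim_key HM Hf Hg gu fv gv.
    have [c [uc Hc vc Hx]] := elim_key HM Hg Hf fu gv fv.
    by exists c; split => // x /Hx [H xu]; split => //; tauto.
  + by move=> v /supph [c [_ _ vc Hx]]; apply: Hx.
Qed.

Lemma underM_Char n (M : zset n -> Prop) : is_finitary_matroid M -> underM (Char M) = M.
Proof.
move=> HM; apply: functional_extensionality => A; apply: propositional_extensionality; split.
  move=> HA; case: (HM) => _ _ _; apply => s sA; apply: NNPP => Hs.
  have [c [uc cs Hc]] := dep_circuit HM Hs.
  apply: (HA (ind_of c)).
  - split; first by exists c => x /supp_ind_of.
    move=> u /supp_ind_of uc'; exists (seq_set c); split => // x xc.
    by apply/supp_ind_of.
  - case: c {uc cs} Hc => [|x c] Hc.
      by case: (circuit_dep Hc); apply: fm_empty.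
    by exists x; apply/supp_ind_of; rewrite inE eqxx.
  - by move=> x /supp_ind_of /cs; apply: sA.
move=> MA f [_ Hf] [u fu] fA.
have [C [HC Cu Cf]] := Hf u fu.
by apply: (circuit_dep HC); apply: fm_sub MA => // x /Cf /fA.
Qed.

Lemma rank_uniq n (M : zset n -> Prop) A k1 k2 : rank_of M A k1 -> rank_of M A k2 -> k1 = k2.
Proof.
move=> [[s1 [u1 z1 S1 M1]] H1] [[s2 [u2 z2 S2 M2]] H2].
apply/eqP; rewrite eqn_leq; rewrite -{1}z1 -{2}z2.
by rewrite (H2 s1 u1 S1 M1) (H1 s2 u2 S2 M2).
Qed.

Lemma rank_bound n (M : zset n -> Prop) r (s : seq (Zn n)) : matroid_rank M r ->
  uniq s -> M (seq_set s) -> (size s <= r)%N.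
Proof. by move=> [_ H] us Ms; apply: H. Qed.

Definition cl n (M : zset n -> Prop) (s : seq (Zn n)) : zset n :=
  fun x => x \in s \/ ~ M (seq_set (x :: s)).

Lemma cl_rank n (M : zset n -> Prop) d (s : seq (Zn n)) : is_finitary_matroid M ->
  uniq s -> size s = d -> M (seq_set s) -> rank_of M (cl M s) d.
Proof.
move=> HM us sz Ms; split.
  by exists s; split => // x xs; left.
move=> t ut tS Mt; rewrite leqNgt; apply/negP => lt.
have lt' : (size s < size t)%N by rewrite sz.
have [x [xt xs Mx]] := fm_aug HM us ut Ms Mt lt'.
by case: (tS x xt) => [xs'|]; [move: xs; rewrite xs' | apply].
Qed.

Lemma hyp_rank n (M : zset n -> Prop) d H : matroid_rank M d.+1 -> hyperplanes M H ->
  [/\ rank_of M H d & forall H', zsubset H H' -> rank_of M H' d -> zsubset H' H].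
Proof.
move=> HR [r [Hr [HH Hmax]]]; have e := rank_uniq Hr HR; subst r; by split.
Qed.

Lemma hyp_of n (M : zset n -> Prop) d H : matroid_rank M d.+1 -> rank_of M H d ->
  (forall H', zsubset H H' -> rank_of M H' d -> zsubset H' H) -> hyperplanes M H.
Proof. by move=> HR HH Hmax; exists d.+1. Qed.

Lemma cl_hyp n (M : zset n -> Prop) d (s : seq (Zn n)) : is_finitary_matroid M ->
  matroid_rank M d.+1 -> uniq s -> size s = d -> M (seq_set s) -> hyperplanes M (cl M s).
Proof.
move=> HM HR us sz Ms; apply: (hyp_of HR (cl_rank HM us sz Ms)).
move=> H' sH' [_ HH'] x xH'; apply: NNPP => ncl.
have xs : x \notin s by apply/negP => xs; apply: ncl; left.
have Mx : M (seq_set (x :: s)) by apply: NNPP => H; apply: ncl; right.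
have : (size (x :: s) <= d)%N.
  apply: HH' => //; first by rewrite /= xs us.
  by move=> y; rewrite /seq_set inE => /orP [/eqP ->//|ys]; apply: sH'; left.
by rewrite /= sz ltnn.
Qed.

Lemma cl_unique n (M : zset n -> Prop) d (s : seq (Zn n)) H : is_finitary_matroid M ->
  matroid_rank M d.+1 -> uniq s -> size s = d -> M (seq_set s) -> hyperplanes M H ->
  zsubset (seq_set s) H -> H = cl M s.
Proof.
move=> HM HR us sz Ms HH sH; have [[_ Hb] Hmax] := hyp_rank HR HH.
have Hcl : zsubset H (cl M s).
  move=> x xH; case: (boolP (x \in s)) => xs; [by left | right => Mx].
  have : (size (x :: s) <= d)%N.
    apply: Hb => //; first by rewrite /= xs us.
    by move=> y; rewrite /seq_set inE => /orP [/eqP ->//|ys]; apply: sH.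
  by rewrite /= sz ltnn.
apply: zset_ext => x; split; first exact: Hcl.
exact: Hmax _ Hcl (cl_rank HM us sz Ms) x.
Qed.


Lemma has_card_le n (C : zset n) k (s : seq (Zn n)) : has_card C k -> zsubset C (seq_set s) ->
  (k <= size (undup s))%N.
Proof.
move=> [w [uw <- Hw]] Cs; apply: uniq_leq_size => // x /Hw /Cs; by rewrite mem_undup.
Qed.

Definition paving_circ n (M : zset n -> Prop) d :=
  forall C, is_circuit M C -> has_card C d.+1 \/ has_card C d.+2.

Lemma pav_small n (M : zset n -> Prop) d (s : seq (Zn n)) : is_finitary_matroid M ->
  paving_circ M d -> uniq s -> (size s <= d)%N -> M (seq_set s).
Proof.
move=> HM Hp us sz; apply: NNPP => Hs.
have [c [uc cs Hc]] := dep_circuit HM Hs.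
have csub : zsubset (seq_set c) (seq_set s) by move=> x /cs.
have := Hp _ Hc; case=> /has_card_le /(_ csub); rewrite (undup_id us) => H.
  by have := leq_trans H sz; rewrite ltnn.
by have := leq_trans (ltnW H) sz; rewrite ltnn.
Qed.

Definition Mof n (d : nat) (P : zset n -> Prop) : zset n -> Prop := fun A =>
  forall s : seq (Zn n), uniq s -> zsubset (seq_set s) A ->
    (size s <= d.+1)%N /\ (size s = d.+1 -> forall B, P B -> ~ zsubset (seq_set s) B).

Lemma pav_char n (M : zset n -> Prop) d A : is_finitary_matroid M -> matroid_rank M d.+1 ->
  paving_circ M d -> M A <-> Mof d (hyperplanes M) A.
Proof.
move=> HM HR Hp; split.
  move=> MA s us sA; have Ms : M (seq_set s) by apply: fm_sub MA.
  split; first exact: rank_bound HR us Ms.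
  move=> sz B HB sB; have [[_ Hb] _] := hyp_rank HR HB.
  by have := Hb s us sB Ms; rewrite sz ltnn.
move=> HA; case: (HM) => _ _ _; apply => s sA; apply: NNPP => Hs.
have [c [uc cs Hc]] := dep_circuit HM Hs.
have cA : zsubset (seq_set c) A by move=> x /cs; apply: sA.
have [sz1 sz2] := HA c uc cA.
have cc : zsubset (seq_set c) (seq_set c) by [].
case: (Hp _ Hc) => /has_card_le /(_ cc); rewrite (undup_id uc) => Hsz; last first.
  by have := leq_trans Hsz sz1; rewrite ltnn.
have ec : size c = d.+1 by apply/eqP; rewrite eqn_leq sz1 Hsz.
move: uc Hc sz2 ec; case: c {cs cA sz1 Hsz cc} => [|x c'] uc Hc sz2 ec; first by [].
have ux : x \notin c' by case/andP: uc.
have uc' : uniq c' by case/andP: uc.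
have Mc' : M (seq_set c').
  by have := circuit_rem uc Hc (mem_head x c'); rewrite /= eqxx.
have szc' : size c' = d by case: ec.
apply: (sz2 ec (cl M c')); first exact: cl_hyp HM HR uc' szc' Mc'.
move=> y; rewrite /seq_set inE => /orP [/eqP ->|yc]; [right | by left].
exact: circuit_dep Hc.
Qed.

Lemma dpart_unique n d (P : zset n -> Prop) (s : seq (Zn n)) B1 B2 : d_partition d P ->
  uniq s -> size s = d -> P B1 -> P B2 -> zsubset (seq_set s) B1 -> zsubset (seq_set s) B2 ->
  B1 = B2.
Proof.
move=> [_ _ _ H4] us sz P1 P2 S1 S2; have [B [_ _ HB]] := H4 s us sz.
by rewrite (HB _ P1 S1) (HB _ P2 S2).
Qed.

Lemma Mof_ext n d (P : zset n -> Prop) (s : seq (Zn n)) B x : d_partition d P ->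
  uniq s -> size s = d -> P B -> zsubset (seq_set s) B -> ~ B x ->
  x \notin s /\ Mof d P (seq_set (x :: s)).
Proof.
move=> HP us sz PB sB Bx.
have xs : x \notin s by apply/negP => /sB.
split => // u uu uS.
have ux : uniq (x :: s) by rewrite /= xs us.
have uS' : {subset u <= x :: s} by move=> y /uS.
have le : (size u <= size (x :: s))%N by apply: uniq_leq_size.
split; first by rewrite /= sz in le.
move=> su B' PB' uB'.
have le' : (size (x :: s) <= size u)%N by rewrite su /= sz.
have [_ equ] := uniq_min_size uu uS' le'.
have sB' : zsubset (seq_set s) B'.
  by move=> y ys; apply: uB'; rewrite /seq_set equ inE ys orbT.
have e := dpart_unique HP us sz PB PB' sB sB'; subst B'.
by apply: Bx; apply: uB'; rewrite /seq_set equ inE eqxx.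
Qed.

Lemma Mof_small n d (P : zset n -> Prop) (s : seq (Zn n)) :
  uniq s -> (size s <= d)%N -> Mof d P (seq_set s).
Proof.
move=> us sz u uu uS.
have le : (size u <= size s)%N by apply: uniq_leq_size => // y /uS.
split; first by apply: leq_trans le (leq_trans sz (leqnSn d)).
move=> e; move: (leq_trans le sz); rewrite e ltnn //.
Qed.

Lemma Mof_self n d (P : zset n -> Prop) (s : seq (Zn n)) : uniq s -> Mof d P (seq_set s) ->
  (size s <= d.+1)%N /\ (size s = d.+1 -> forall B, P B -> ~ zsubset (seq_set s) B).
Proof. by move=> us H; apply: H. Qed.

Lemma exists_notin n (s t : seq (Zn n)) : uniq t -> (size s < size t)%N ->
  exists x, x \in t /\ x \notin s.
Proof.
move=> ut lt; apply: NNPP => H; have : {subset t <= s}.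
  by move=> x xt; apply: NNPP => /negP xs; apply: H; exists x.
by move=> /(uniq_leq_size ut); rewrite leqNgt lt.
Qed.

Lemma Mof_matroid n d (P : zset n -> Prop) : d_partition d P -> is_finitary_matroid (Mof d P).
Proof.
move=> HP; split.
- by exists (seq_set [::]); apply: Mof_small.
- by move=> A B AB HB s us sA; apply: HB => // x /sA /AB.
- move=> s t us ut Ms Mt lt.
  have [st1 st2] := Mof_self ut Mt.
  have ss : (size s <= d)%N by rewrite -ltnS; apply: leq_trans lt st1.
  case: (ltngtP (size s) d) => [sd|sd|sd].
    2: by have := leq_trans sd ss; rewrite ltnn.
    have [x [xt xs]] := exists_notin ut lt.
    exists x; split => //; apply: Mof_small; first by rewrite /= xs us.
    by rewrite /=.
  have [B [PB sB HB]] : exists B, [/\ P B, zsubset (seq_set s) B &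
     forall B', P B' -> zsubset (seq_set s) B' -> B' = B] by case: HP => _ _ _; apply.
  have et : size t = d.+1 by apply/eqP; rewrite eqn_leq st1 -sd.
  have [x [xt Bx]] : exists x, x \in t /\ ~ B x.
    apply: NNPP => H; apply: (st2 et B PB) => x xt; apply: NNPP => Bx; apply: H.
    by exists x.
  have [xs Mx] := Mof_ext HP us sd PB sB Bx.
  by exists x.
- move=> A HA s us sA; exact: Mof_self us (HA s sA).
Qed.

Lemma Mof_inv n d (P : zset n -> Prop) : zinvariant P -> zinvariant (Mof d P).
Proof.
move=> Hinv; apply: zinv_of => u A HA s us sA.
set s' := [seq x + - u | x <- s].
have us' : uniq s' by rewrite map_tr_uniq.
have sA' : zsubset (seq_set s') A.
  rewrite map_tr_seq -(translateK u A); exact: translate_sub.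
have [h1 h2] := HA s' us' sA'; rewrite size_map in h1 h2.
split => // sz B PB sB; apply: (h2 sz (translate (- u) B)).
  exact: (proj2 (Hinv (- u) B)).
by rewrite map_tr_seq; apply: translate_sub.
Qed.

Lemma Mof_rank n d (P : zset n -> Prop) : d_partition d P -> matroid_rank (Mof d P) d.+1.
Proof.
move=> HP; split; last first.
  by move=> s us _ Ms; case: (Mof_self us Ms).
have [B [B' [x [PB PB' B'x Bx]]]] : exists B B' x, [/\ P B, P B', B' x & ~ B x].
  case: (HP) => _ [B1 [B2 [P1 P2 ne]]] _ _.
  apply: NNPP => H; apply: ne; apply: zset_ext => x; split => Bx.
    apply: NNPP => B2x; apply: H; by exists B2, B1, x.
  apply: NNPP => B1x; apply: H; by exists B1, B2, x.
have [s [us sz sB]] : exists s : seq (Zn n), [/\ uniq s, size s = d & zsubset (seq_set s) B].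
  by case: HP => _ _ H3 _; apply: H3.
have [xs Mx] := Mof_ext HP us sz PB sB Bx.
exists (x :: s); split => //; first by rewrite /= xs us.
by rewrite /= sz.
Qed.

Lemma circ_card n (M : zset n -> Prop) (c t : seq (Zn n)) : is_circuit M (seq_set c) ->
  uniq t -> {subset t <= c} -> ~ M (seq_set t) -> has_card (seq_set c) (size t).
Proof.
move=> [_ Hmin] ut tc Mt; have ct := Hmin (seq_set t) (fun x (h : x \in t) => tc x h) Mt.
exists t; split => // x; split; [exact: ct | exact: tc].
Qed.

Lemma Mof_circ n d (P : zset n -> Prop) : d_partition d P -> paving_circ (Mof d P) d.
Proof.
move=> HP C HC; have HM := Mof_matroid HP.
have [c [uc E]] := circuit_seq HM HC; subst C.
have [t [ut tc Ht]] : exists t : seq (Zn n), [/\ uniq t, {subset t <= c} &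
   ~ ((size t <= d.+1)%N /\ (size t = d.+1 -> forall B, P B -> ~ zsubset (seq_set t) B))].
  apply: NNPP => H; apply: (circuit_dep HC) => t ut tc.
  apply: NNPP => H'; apply: H; exists t; split => // x /tc.
case: (leqP (size t) d.+1) => st.
  left; have e : size t = d.+1.
    apply: NNPP => ne; apply: Ht; split => // e; by case: (ne e).
  rewrite -e; apply: (circ_card HC ut tc) => Mt.
  apply: Ht; split => //; exact: (Mof_self ut Mt).2.
right; set t' := take d.+2 t.
have st' : size t' = d.+2 by rewrite /t' size_takel.
have ut' : uniq t' by apply: take_uniq.
have tc' : {subset t' <= c} by move=> x /mem_take /tc.
rewrite -st'; apply: (circ_card HC ut' tc') => Mt.
by have := (Mof_self ut' Mt).1; rewrite st' ltnn.
Qed.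

Lemma block_rank n d (P : zset n -> Prop) B : d_partition d P -> P B -> rank_of (Mof d P) B d.
Proof.
move=> HP PB; split.
  have [s [us sz sB]] : exists s : seq (Zn n), [/\ uniq s, size s = d & zsubset (seq_set s) B].
    by case: HP => _ _ H3 _; apply: H3.
  exists s; split => //; apply: Mof_small => //; by rewrite sz.
move=> t ut tB Mt; have [h1 h2] := Mof_self ut Mt.
rewrite -ltnS; case: (ltngtP (size t) d.+1) => // [gt|e].
  by move: (leq_trans gt h1); rewrite ltnn.
by case: (h2 e B PB tB).
Qed.

Lemma Mof_hyp n d (P : zset n -> Prop) : d_partition d P -> hyperplanes (Mof d P) = P.
Proof.
move=> HP; have HR := Mof_rank HP.
apply: functional_extensionality => H; apply: propositional_extensionality; split.
  move=> HH; have [[[s [us sz sH Ms]] Hb] Hmax] := hyp_rank HR HH.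
  have [B [PB sB HB]] : exists B, [/\ P B, zsubset (seq_set s) B &
     forall B', P B' -> zsubset (seq_set s) B' -> B' = B] by case: HP => _ _ _; apply.
  have HsubB : zsubset H B.
    move=> x xH; apply: NNPP => Bx; have [xs Mx] := Mof_ext HP us sz PB sB Bx.
    have : (size (x :: s) <= d)%N.
      apply: Hb; first by rewrite /= xs us.
        by move=> y; rewrite /seq_set inE => /orP [/eqP ->//|/sH].
      exact: Mx.
    by rewrite /= sz ltnn.
  suff -> : H = B by [].
  apply: zset_ext => x; split; first exact: HsubB.
  exact: Hmax _ HsubB (block_rank HP PB) x.
move=> PH; apply: (hyp_of HR (block_rank HP PH)) => H' HH' [[s [us sz sH Ms]] Hb] x xH'.
apply: NNPP => Hx.
have [t [ut tz tH]] : exists t : seq (Zn n), [/\ uniq t, size t = d & zsubset (seq_set t) H].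
  by case: HP => _ _ H3 _; apply: H3.
have [xt Mx] := Mof_ext HP ut tz PH tH Hx.
have : (size (x :: t) <= d)%N.
  apply: Hb; first by rewrite /= xt ut.
    by move=> y; rewrite /seq_set inE => /orP [/eqP ->//|/tH /HH'].
  exact: Mx.
by rewrite /= tz ltnn.
Qed.

Lemma rank_of_tr n (M : zset n -> Prop) A k u : zinvariant M -> rank_of M A k ->
  rank_of M (translate u A) k.
Proof.
move=> Hinv [[s [us sz sA Ms]] Hb]; split.
  exists [seq x + u | x <- s]; split.
  - by rewrite map_tr_uniq.
  - by rewrite size_map.
  - by rewrite map_tr_seq; apply: translate_sub.
  - by rewrite map_tr_seq; apply: (proj2 (Hinv u _)).
move=> t ut tA Mt.
have := Hb [seq x + - u | x <- t]; rewrite size_map map_tr_uniq map_tr_seq; apply => //.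
  rewrite -(translateK u A); exact: translate_sub.
exact: (proj2 (Hinv (- u) _)).
Qed.

Lemma hyp_inv n (M : zset n -> Prop) : zinvariant M -> zinvariant (hyperplanes M).
Proof.
move=> Hinv; apply: zinv_of => u H [r [Hr [HH Hmax]]]; exists r; split => //; split.
  exact: rank_of_tr.
move=> H' sub HH' x xH'.
have sub' : zsubset H (translate (- u) H').
  rewrite -(translateK u H); exact: translate_sub.
have := Hmax _ sub' (rank_of_tr (- u) Hinv HH') (x - u).
by rewrite /translate opprK subrK; apply.
Qed.

Lemma pav_dpart n (M : zset n -> Prop) d : (0 < d)%N -> is_finitary_matroid M ->
  matroid_rank M d.+1 -> paving_circ M d -> d_partition d (hyperplanes M).
Proof.
move=> d0 HM HR Hp; have [[b [ub szb _ Mb]] _] := HR.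
split.
- by exists b.
- move: ub szb Mb; case: b => [|x [|y r]] //=.
    by move=> _ [e]; move: d0; rewrite -e.
  move=> ub [szr] Mb.
  have ur : uniq r by case/and3P: ub.
  have s1u : uniq (y :: r) by case/andP: ub.
  have s2u : uniq (x :: r).
    case/and3P: ub; rewrite inE negb_or => /andP [_ xr] _ _; by rewrite /= xr ur.
  have M1 : M (seq_set (y :: r)).
    by apply: fm_subs Mb => // z zs; rewrite inE zs orbT.
  have M2 : M (seq_set (x :: r)).
    by apply: fm_subs Mb => // z; rewrite !inE => /orP [->|->]; rewrite ?orbT.
  have sz1 : size (y :: r) = d by rewrite /= szr.
  have sz2 : size (x :: r) = d by rewrite /= szr.
  exists (cl M (y :: r)), (cl M (x :: r)); split.
  + exact: cl_hyp HM HR s1u sz1 M1.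
  + exact: cl_hyp HM HR s2u sz2 M2.
  + move=> E; have [_ Hb] := cl_rank HM s1u sz1 M1.
    have : (size [:: x, y & r] <= d)%N.
      apply: Hb => // z; rewrite /seq_set inE => /orP [/eqP ->|zs].
        by rewrite E; left; rewrite inE eqxx.
      by left.
    by rewrite /= szr ltnn.
- move=> H HH; have [[[s [us sz sH _]] _] _] := hyp_rank HR HH.
  by exists s.
- move=> s us sz.
  have Ms : M (seq_set s) by apply: (pav_small HM Hp us); rewrite sz.
  exists (cl M s); split.
  + exact: cl_hyp HM HR us sz Ms.
  + by move=> x xs; left.
  + move=> B' HB' sB'; exact: cl_unique HM HR us sz Ms HB' sB'.
Qed.

Local Close Scope ring_scope.

Theorem mainTheorem3 (n : nat) :
  (* (1) I |-> underM I is a bijection from tropical ideals onto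
         translation-invariant finitary matroids on Z^n *)
  ((forall I : Bcoef n -> Prop, is_tropical_ideal I ->
       is_finitary_matroid (underM I) /\ zinvariant (underM I)) /\
   (forall I J : Bcoef n -> Prop, is_tropical_ideal I -> is_tropical_ideal J ->
       underM I = underM J -> I = J) /\
   (forall M : zset n -> Prop, is_finitary_matroid M -> zinvariant M ->
       exists I, is_tropical_ideal I /\ underM I = M)) /\
  (* (2) for d >= 1, I |-> H(underM I) is a bijection from paving tropical
         ideals of degree d+1 onto invariant d-partitions of Z^n *)
  (forall d : nat, (0 < d)%N ->
   (forall I : Bcoef n -> Prop, paving_tropical_ideal I d.+1 ->
       d_partition d (hyperplanes (underM I)) /\
       zinvariant (hyperplanes (underM I))) /\
   (forall I J : Bcoef n -> Prop,
       paving_tropical_ideal I d.+1 -> paving_tropical_ideal J d.+1 ->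
       hyperplanes (underM I) = hyperplanes (underM J) -> I = J) /\
   (forall P : zset n -> Prop, d_partition d P -> zinvariant P ->
       exists I, paving_tropical_ideal I d.+1 /\ hyperplanes (underM I) = P)).
Proof.
have inj1 : forall I J : Bcoef n -> Prop, is_tropical_ideal I -> is_tropical_ideal J ->
    underM I = underM J -> I = J.
  by move=> I J HI HJ E; rewrite (trop_Char HI) (trop_Char HJ) E.
split; first split.
- by move=> I HI; split; [exact: trop_matroid | exact: trop_inv].
- split; first exact: inj1.
  move=> M HM Hinv; exists (Char M); split; first exact: Char_trop.
  exact: underM_Char.
move=> d d0; split; last split.
- move=> I [[HI HR] Hp]; split.
    exact: pav_dpart d0 (trop_matroid HI) HR Hp.
  exact: hyp_inv (trop_inv HI).
- move=> I J [[HI HRI] HpI] [[HJ HRJ] HpJ] E; apply: inj1 => //.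
  apply: functional_extensionality => A; apply: propositional_extensionality.
  rewrite (pav_char A (trop_matroid HI) HRI HpI) (pav_char A (trop_matroid HJ) HRJ HpJ) E.
  by [].
- move=> P HP Hinv; exists (Char (Mof d P)).
  have HM := Mof_matroid HP; have HT := Char_trop HM (Mof_inv d Hinv).
  rewrite /paving_tropical_ideal /zero_dim_tropical (underM_Char HM).
  split; last exact: Mof_hyp.
  split; first split => //.
    exact: Mof_rank.
  exact: Mof_circ.
Qed.
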